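(* Let $h>0$ be such that the matrix $I_d+\frac{h^2}{2}\nabla^2F(q)M$ is invertible for every $q\in\mathbb{R}^d$, so that the scheme below defines, for each fixed realization of the Wiener increments, a smooth map $(P^h[n],Q^h[n])\mapsto(P^h[n+1],Q^h[n+1])$. Then this one-step map is conformally symplectic: $$dP^h[n+1]\wedge dQ^h[n+1]=e^{-vh}\,dP^h[n]\wedge dQ^h[n],$$ where $dP\wedge dQ=\sum_{i=1}^d dP_i\wedge dQ_i$.
   Context: Let $d\le m$, let $F\in C^\infty(\mathbb{R}^d,\mathbb{R})$ and $f=\nabla F:\mathbb{R}^d\to\mathbb{R}^d$, let $M\in\mathbb{R}^{d\times d}$ be symmetric positive definite, $v>0$, and $\sigma=(\sigma_1,\dots,\sigma_m)\in\mathbb{R}^{d\times m}$ with $\mathrm{rank}\,\sigma=d$. Let $W=(W_1,\dots,W_m)^\top$ be a standard $m$-dimensional Wiener process. For a step size $h>0$, $t_n=nh$ and $\Delta_{n+1}W=W(t_{n+1})-W(t_n)$, the scheme is: given $(P^h[0],Q^h[0])=(p,q)\in\mathbb{R}^{2d}$, $$P^h[n+1]=e^{-vh}P^h[n]-\tfrac{h^2}{2}\nabla^2F(Q^h[n])MP^h[n+1]-h\big(1+\tfrac{vh}{2}\big)e^{-vh}f(Q^h[n])-\big(1+\tfrac{vh}{2}\big)e^{-vh}\sigma\Delta_{n+1}W,$$ $$Q^h[n+1]=Q^h[n]+h\big(1-\tfrac{vh}{2}\big)e^{vh}MP^h[n+1]+\tfrac{h^2}{2}Mf(Q^h[n])+\tfrac{h}{2}M\sigma\Delta_{n+1}W.$$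 (The first equation is linear in $P^h[n+1]$ and is solved for it.) *)

(* Defs.v *)
From mathcomp Require Import ssreflect ssrbool eqtype ssrnat fintype bigop.
From Stdlib Require Import Reals.
Open Scope R_scope.

Definition vec (n : nat) := 'I_n -> R.

Definition vsum {n : nat} (f : 'I_n -> R) : R := \big[Rplus/0]_(i < n) f i.

Definition kdelta {n : nat} (i j : 'I_n) : R := if i == j then 1 else 0.

Definition shift {n : nat} (x : vec n) (i : 'I_n) (t : R) : vec n :=
  fun j => if j == i then x j + t else x j.

Definition is_partial {n : nat} (G : vec n -> R) (i : 'I_n) (x : vec n) (l : R)
  : Prop := derivable_pt_lim (fun t => G (shift x i t)) 0 l.

(* continuity on R^n (all norms are equivalent; sup norm used) *)
Definition continuous_vec {n : nat} (G : vec n -> R) : Prop :=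
  forall x eps, 0 < eps -> exists delta, 0 < delta /\
    forall y : vec n, (forall j, Rabs (y j - x j) < delta) ->
      Rabs (G y - G x) < eps.

Fixpoint Ck {n : nat} (k : nat) (G : vec n -> R) : Prop :=
  match k with
  | O => continuous_vec G
  | S k' => exists dG : 'I_n -> vec n -> R,
      (forall i x, is_partial G i x (dG i x)) /\ (forall i, Ck k' (dG i))
  end.

Definition smooth {n : nat} (G : vec n -> R) : Prop := forall k, Ck k G.

(* Main.v *)
Require Import Defs.
From HB Require Import structures.
From Stdlib Require Import Reals Lra Psatz FunctionalExtensionality ClassicalEpsilon.
From Coquelicot Require Import Coquelicot.
From mathcomp Require Import ssreflect ssrbool eqtype ssrnat fintype bigop.
From Stdlib Require Import Reals.
Open Scope R_scope.

Lemma Radd_assoc : ssrfun.associative Rplus. Proof. move=> *; ring. Qed.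
HB.instance Definition _ := Monoid.isComLaw.Build R 0 Rplus Radd_assoc Rplus_comm Rplus_0_l.

Lemma vsum_ext {n} (f g : 'I_n -> R) : (forall i, f i = g i) -> vsum f = vsum g.
Proof. move=> H; apply: eq_bigr => i _; exact: H. Qed.

Lemma vsum_add {n} (f g : 'I_n -> R) : vsum (fun i => f i + g i) = vsum f + vsum g.
Proof. exact: big_split. Qed.

Lemma vsum_scal {n} c (f : 'I_n -> R) : vsum (fun i => c * f i) = c * vsum f.
Proof. rewrite /vsum; elim/big_rec2: _ => [|i y1 y2 _ ->]; ring. Qed.

Lemma vsum_opp {n} (f : 'I_n -> R) : vsum (fun i => - f i) = - vsum f.
Proof. rewrite /vsum; elim/big_rec2: _ => [|i y1 y2 _ ->]; ring. Qed.

Lemma vsum_sub {n} (f g : 'I_n -> R) : vsum (fun i => f i - g i) = vsum f - vsum g.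
Proof. rewrite /Rminus vsum_add vsum_opp //. Qed.

Lemma vsum_swap {n} (f : 'I_n -> 'I_n -> R) :
  vsum (fun i => vsum (fun j => f i j)) = vsum (fun j => vsum (fun i => f i j)).
Proof. exact: exchange_big. Qed.

Lemma vsum0 {n} : vsum (fun _ : 'I_n => 0) = 0.
Proof. by rewrite /vsum big1. Qed.

Lemma kdeltaC {n} (i j : 'I_n) : kdelta i j = kdelta j i.
Proof. by rewrite /kdelta eq_sym. Qed.

Lemma vsum_delta {n} (g : 'I_n -> R) b : vsum (fun i => g i * kdelta i b) = g b.
Proof.
rewrite /vsum (bigD1 b) //= /kdelta eqxx big1 ?Rplus_0_r ?Rmult_1_r // => i /negPf ->.
by rewrite Rmult_0_r.
Qed.

Lemma vsum_delta_l {n} (g : 'I_n -> R) b : vsum (fun i => kdelta b i * g i) = g b.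
Proof. rewrite -(vsum_delta g b); apply: vsum_ext => i; rewrite kdeltaC; ring. Qed.

Lemma vsum_abs {n} (f : 'I_n -> R) : Rabs (vsum f) <= vsum (fun i => Rabs (f i)).
Proof.
rewrite /vsum; elim/big_rec2: _ => [|i y1 y2 _ H]; first by rewrite Rabs_R0; lra.
apply: Rle_trans (Rabs_triang _ _) _; lra.
Qed.

Lemma vsum_le {n} (f g : 'I_n -> R) : (forall i, f i <= g i) -> vsum f <= vsum g.
Proof. move=> H; rewrite /vsum; elim/big_rec2: _ => [|i y1 y2 _ H2]; first lra.
have := H i; lra. Qed.

Lemma vsum_ge0 {n} (f : 'I_n -> R) : (forall i, 0 <= f i) -> 0 <= vsum f.
Proof. move=> H; rewrite -(@vsum0 n); exact: vsum_le. Qed.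

Lemma vsum_term {n} (f : 'I_n -> R) j : (forall i, 0 <= f i) -> f j <= vsum f.
Proof.
move=> H; rewrite /vsum (bigD1 j) //=; set S := (X in f j + X).
have : 0 <= S by rewrite /S; elim/big_rec: _ => [|i y _ Hy]; [lra| have := H i; lra].
lra.
Qed.

Lemma cont_eps f x : continuity_pt f x <-> forall eps, 0 < eps -> exists del, 0 < del /\
   forall y, Rabs (y - x) < del -> Rabs (f y - f x) < eps.
Proof.
split.
- move=> H eps He; case: (H eps He) => del [Hd H2]; exists del; split => // y Hy.
  case: (Req_dec y x) => [->|Hyx]; first by rewrite Rminus_diag Rabs_R0.
  exact: (H2 y (conj (conj I (not_eq_sym Hyx)) Hy)).
- move=> H eps He; case: (H eps He) => del [Hd H2]; exists del; split => // y [_ Hy].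
  exact: H2.
Qed.

Lemma dpl_cont f x l : derivable_pt_lim f x l -> continuity_pt f x.
Proof. move=> H; apply: derivable_continuous_pt; exists l; exact H. Qed.

Lemma dpl_prod0 (g p : R -> R) l : g 0 = 0 -> derivable_pt_lim g 0 l ->
  continuity_pt p 0 -> derivable_pt_lim (fun t => g t * p t) 0 (l * p 0).
Proof.
move=> g0 Hg /cont_eps Hp eps He.
set e1 := eps / (2 * (Rabs (p 0) + 1)).
have He1 : 0 < e1 by rewrite /e1; have := Rabs_pos (p 0); move=> ?; apply: Rdiv_lt_0_compat; lra.
set e2 := Rmin 1 (eps / (2 * (Rabs l + 1))).
have He2 : 0 < e2 by rewrite /e2; apply: Rmin_pos; [lra| have := Rabs_pos l; move=> ?; apply: Rdiv_lt_0_compat; lra].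
case: (Hg e1 He1) => d1 Hd1.
case: (Hp e2 He2) => d2 [Hd2 Hd2'].
have Hd : 0 < Rmin d1 d2 by apply: Rmin_pos => //; exact: cond_pos.
exists (mkposreal _ Hd) => h Hh Hhd /=.
have Hh1 : Rabs h < d1 by apply: Rlt_le_trans Hhd _; apply: Rmin_l.
have Hh2 : Rabs (h - 0) < d2 by rewrite Rminus_0_r; apply: Rlt_le_trans Hhd _; apply: Rmin_r.
have A1 := Hd1 h Hh Hh1. have A2 := Hd2' h Hh2.
rewrite Rplus_0_l g0 in A1 *.
have -> : (g h * p h - 0 * p 0) / h - l * p 0 =
   ((g h - 0) / h - l) * p h + l * (p h - p 0) by field.
set a := (g h - 0) / h - l in A1 *. set b := p h - p 0 in A2 *.
have Hph : Rabs (p h) <= Rabs (p 0) + e2.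
  have -> : p h = p 0 + b by rewrite /b; ring.
  apply: Rle_trans (Rabs_triang _ _) _; lra.
have Hb : Rabs b <= eps / (2 * (Rabs l + 1)) by apply: Rle_trans (Rlt_le _ _ A2) (Rmin_r _ _).
have He21 : e2 <= 1 by apply: Rmin_l.
apply: Rle_lt_trans (Rabs_triang _ _) _.
rewrite !Rabs_mult.
have T1 : Rabs a * Rabs (p h) <= e1 * (Rabs (p 0) + 1).
  apply: Rmult_le_compat; try exact: Rabs_pos; lra.
have T1' : e1 * (Rabs (p 0) + 1) = eps / 2.
  rewrite /e1; field; have := Rabs_pos (p 0); lra.
have T2 : Rabs l * Rabs b <= Rabs l * (eps / (2 * (Rabs l + 1))).
  apply: Rmult_le_compat_l => //; exact: Rabs_pos.
have T2' : Rabs l * (eps / (2 * (Rabs l + 1))) < eps / 2.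
  have Hl := Rabs_pos l.
  rewrite -[X in _ < X](Rmult_1_l (eps/2)).
  have -> : Rabs l * (eps / (2 * (Rabs l + 1))) = (Rabs l / (Rabs l + 1)) * (eps / 2) by field; lra.
  apply: Rmult_lt_compat_r; first lra.
  apply/Rlt_div_l; lra.
lra.
Qed.

Lemma dpl_vsum {n} (g : 'I_n -> R -> R) (l : 'I_n -> R) x :
  (forall i, derivable_pt_lim (g i) x (l i)) ->
  derivable_pt_lim (fun t => vsum (fun i => g i t)) x (vsum l).
Proof.
elim: n g l => [|n IH] g l H.
  have -> : (fun t => vsum (fun i : 'I_0 => g i t)) = (fun _ => 0).
    by apply: functional_extensionality => t; rewrite /vsum big_ord0.
  rewrite /vsum big_ord0; exact: derivable_pt_lim_const.
have -> : (fun t => vsum (fun i : 'I_n.+1 => g i t)) =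
  (fun t => vsum (fun i : 'I_n => g (widen_ord (leqnSn n) i) t) + g ord_max t).
  by apply: functional_extensionality => t; rewrite /vsum big_ord_recr.
have -> : vsum l = vsum (fun i : 'I_n => l (widen_ord (leqnSn n) i)) + l ord_max
  by rewrite /vsum big_ord_recr.
apply: (derivable_pt_lim_plus (fun t => vsum (fun i : 'I_n => g (widen_ord (leqnSn n) i) t))
  (g ord_max)); last exact: H.
exact: IH.
Qed.

Lemma cont_vsum {n} (g : 'I_n -> R -> R) x :
  (forall i, continuity_pt (g i) x) ->
  continuity_pt (fun t => vsum (fun i => g i t)) x.
Proof.
elim: n g => [|n IH] g H.
  have -> : (fun t => vsum (fun i : 'I_0 => g i t)) = (fun _ => 0).
    by apply: functional_extensionality => t; rewrite /vsum big_ord0.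
  exact: continuity_pt_const.
have -> : (fun t => vsum (fun i : 'I_n.+1 => g i t)) =
  (fun t => vsum (fun i : 'I_n => g (widen_ord (leqnSn n) i) t) + g ord_max t).
  by apply: functional_extensionality => t; rewrite /vsum big_ord_recr.
apply: (continuity_pt_plus (fun t => vsum (fun i : 'I_n => g (widen_ord (leqnSn n) i) t))
  (g ord_max)); last exact: H.
exact: IH.
Qed.

Lemma cont_abs f x : continuity_pt f x -> continuity_pt (fun t => Rabs (f t)) x.
Proof. move=> H; apply: (continuity_pt_comp f Rabs) => //; exact: Rcontinuity_abs. Qed.

Lemma cont_bound (K Z c : R -> R) : continuity_pt K 0 -> K 0 = 0 ->
  continuity_pt Z 0 -> Z 0 = 0 ->
  (forall t, K t <= 1/2 -> Rabs (c t - c 0) <= Z t) -> continuity_pt c 0.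
Proof.
move=> /cont_eps HK K0 /cont_eps HZ Z0 H; apply/cont_eps => eps He.
case: (HK (1/2)) => [|d1 [Hd1 H1]]; first lra.
case: (HZ eps He) => d2 [Hd2 H2].
exists (Rmin d1 d2); split; first exact: Rmin_pos.
move=> y Hy.
have Hy1 : Rabs (y - 0) < d1 by apply: Rlt_le_trans Hy _; apply: Rmin_l.
have Hy2 : Rabs (y - 0) < d2 by apply: Rlt_le_trans Hy _; apply: Rmin_r.
have := H1 _ Hy1; have := H2 _ Hy2; rewrite K0 Z0 !Rminus_0_r => A B.
have B' : K y <= 1/2 by have := Rle_abs (K y); lra.
have := H y B'; have := Rle_abs (Z y); lra.
Qed.

Lemma shift0 {n} (x : vec n) i : shift x i 0 = x.
Proof. apply: functional_extensionality => j; rewrite /shift; case: eqP => _ //; ring. Qed.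

Lemma is_partial_unique {n} (G : vec n -> R) i x l1 l2 :
  is_partial G i x l1 -> is_partial G i x l2 -> l1 = l2.
Proof. exact: uniqueness_limite. Qed.

Lemma dpl_shift f u l : derivable_pt_lim (fun t => f (u + t)) 0 l -> derivable_pt_lim f u l.
Proof.
move=> H eps He; case: (H eps He) => del Hd; exists del => h Hh Hhd.
have := Hd h Hh Hhd; by rewrite Rplus_0_l Rplus_0_r.
Qed.

Lemma shift_comm {n} (x : vec n) j k u v t : j != k ->
  shift (shift (shift x j u) k v) j t = shift (shift x j (u + t)) k v.
Proof.
move=> Hjk; apply: functional_extensionality => i; rewrite /shift.
case: (eqVneq i k) => [->|Hik]; first by rewrite eq_sym (negPf Hjk).
case: (eqVneq i j) => _ //; ring.
Qed.

Lemma shift_add {n} (x : vec n) k v t :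
  shift (shift x k v) k t = shift x k (v + t).
Proof.
apply: functional_extensionality => i; rewrite /shift.
case: (eqVneq i k) => _ //; ring.
Qed.

Lemma schwarz_vec {d} (g : vec d -> R) (g1 : 'I_d -> vec d -> R)
  (g2 : 'I_d -> 'I_d -> vec d -> R) :
  (forall j x, is_partial g j x (g1 j x)) ->
  (forall j k x, is_partial (g1 j) k x (g2 j k x)) ->
  (forall j k, continuous_vec (g2 j k)) -> forall j k x, g2 j k x = g2 k j x.
Proof.
move=> H1 H2 Hc j k x.
case: (eqVneq j k) => [->//|Hjk].
pose sh2 u v := shift (shift x j u) k v.
have P1 : forall (G : vec d -> R) (G' : vec d -> R), (forall y, is_partial G j y (G' y)) ->
   forall u v, is_derive (fun z => G (sh2 z v)) u (G' (sh2 u v)).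
  move=> G G' HG u v; apply/is_derive_Reals; apply: dpl_shift.
  have -> : (fun t => G (sh2 (u + t) v)) = (fun t => G (shift (sh2 u v) j t)).
    by apply: functional_extensionality => t; rewrite /sh2 shift_comm.
  exact: HG.
have P2 : forall (G : vec d -> R) (G' : vec d -> R), (forall y, is_partial G k y (G' y)) ->
   forall u v, is_derive (fun z => G (sh2 u z)) v (G' (sh2 u v)).
  move=> G G' HG u v; apply/is_derive_Reals; apply: dpl_shift.
  have -> : (fun t => G (sh2 u (v + t))) = (fun t => G (shift (sh2 u v) k t)).
    by apply: functional_extensionality => t; rewrite /sh2 shift_add.
  exact: HG.
pose phi u v := g (sh2 u v).
have E1 : forall z v, Derive (fun t => phi z t) v = g1 k (sh2 z v).
  move=> z v; apply: is_derive_unique; exact: (P2 g (g1 k)).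
have E2 : forall z u, Derive (fun t => phi t z) u = g1 j (sh2 u z).
  move=> z u; apply: is_derive_unique; exact: (P1 g (g1 j)).
have F1 : forall v, (fun z => Derive (fun t => phi z t) v) = (fun z => g1 k (sh2 z v)).
  by move=> v; apply: functional_extensionality => z; rewrite E1.
have F2 : forall u, (fun z => Derive (fun t => phi t z) u) = (fun z => g1 j (sh2 u z)).
  by move=> u; apply: functional_extensionality => z; rewrite E2.
have G1 : forall u v, Derive (fun z => Derive (fun t => phi z t) v) u = g2 k j (sh2 u v).
  move=> u v; rewrite F1; apply: is_derive_unique; exact: (P1 (g1 k) (g2 k j)).
have G2 : forall u v, Derive (fun z => Derive (fun t => phi t z) u) v = g2 j k (sh2 u v).
  move=> u v; rewrite F2; apply: is_derive_unique; exact: (P2 (g1 j) (g2 j k)).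
have Cont : forall a b, continuity_2d_pt (fun u v => g2 a b (sh2 u v)) 0 0.
  move=> a b eps; case: (Hc a b (sh2 0 0) eps (cond_pos eps)) => del [Hd Hdel].
  have Hd2 : 0 < del / 2 by lra.
  exists (mkposreal _ Hd2) => u v /= Hu Hv; apply: Hdel => i.
  rewrite Rminus_0_r in Hu; rewrite Rminus_0_r in Hv.
  have Hu' := Rabs_pos u. have Hv' := Rabs_pos v.
  rewrite /sh2 /shift; case: (i == k); case: (i == j).
  + have -> : x i + u + v - (x i + 0 + 0) = u + v by ring.
    apply: Rle_lt_trans (Rabs_triang _ _) _; lra.
  + have -> : x i + v - (x i + 0) = v by ring. lra.
  + have -> : x i + u - (x i + 0) = u by ring. lra.
  + rewrite Rminus_diag Rabs_R0; lra.
have S := Schwarz phi 0 0.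
rewrite G1 G2 in S.
have Hx : sh2 0 0 = x by rewrite /sh2 !shift0.
rewrite -Hx; symmetry; apply: S.
- exists (mkposreal _ Rlt_0_1) => u v _ _; split; [|split; [|split]].
  + eexists; exact: (P1 g (g1 j)).
  + eexists; exact: (P2 g (g1 k)).
  + rewrite F1; eexists; exact: (P1 (g1 k) (g2 k j)).
  + rewrite F2; eexists; exact: (P2 (g1 j) (g2 j k)).
- have -> : (fun u v => Derive (fun z => Derive (fun t => phi z t) v) u) =
      (fun u v => g2 k j (sh2 u v)).
    by apply: functional_extensionality => u; apply: functional_extensionality => v.
  exact: Cont.
- have -> : (fun u v => Derive (fun z => Derive (fun t => phi t z) u) v) =
      (fun u v => g2 j k (sh2 u v)).
    by apply: functional_extensionality => u; apply: functional_extensionality => v.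
  exact: Cont.
Qed.

Lemma partial_fun_eq {d} (G : vec d -> R) (dG g : 'I_d -> vec d -> R) :
  (forall i x, is_partial G i x (dG i x)) -> (forall i x, is_partial G i x (g i x)) ->
  forall i, dG i = g i.
Proof.
move=> H1 H2 i; apply: functional_extensionality => x; exact: is_partial_unique (H1 i x) (H2 i x).
Qed.

Lemma hess_cont {d} (F : vec d -> R) f Hess : smooth F ->
  (forall x i, is_partial F i x (f x i)) ->
  (forall x i j, is_partial (fun y => f y i) j x (Hess x i j)) ->
  forall i j, continuous_vec (fun y => Hess y i j).
Proof.
move=> Hs Hg HH i j.
case: (Hs 2%nat) => d1 [Hd1 Hc1].
have E1 := partial_fun_eq F d1 (fun i x => f x i) Hd1 (fun i x => Hg x i) i.
case: (Hc1 i) => d2 [Hd2 Hc2].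
rewrite E1 in Hd2.
have E2 := partial_fun_eq _ d2 (fun j x => Hess x i j) Hd2 (fun j x => HH x i j) j.
by have := Hc2 j; rewrite E2.
Qed.

Lemma third_ex {d} (F : vec d -> R) f Hess : smooth F ->
  (forall x i, is_partial F i x (f x i)) ->
  (forall x i j, is_partial (fun y => f y i) j x (Hess x i j)) ->
  forall i j a, exists t : vec d -> R,
    (forall x, is_partial (fun y => Hess y i j) a x (t x)) /\ continuous_vec t.
Proof.
move=> Hs Hg HH i j a.
case: (Hs 3%nat) => d1 [Hd1 Hc1].
have E1 := partial_fun_eq F d1 (fun i x => f x i) Hd1 (fun i x => Hg x i) i.
case: (Hc1 i) => d2 [Hd2 Hc2].
rewrite E1 in Hd2.
have E2 := partial_fun_eq _ d2 (fun j x => Hess x i j) Hd2 (fun j x => HH x i j) j.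
case: (Hc2 j) => d3 [Hd3 Hc3].
rewrite E2 in Hd3.
exists (d3 a); split; [move=> x; exact: Hd3 | exact: Hc3].
Qed.

Lemma third_fun {d} (F : vec d -> R) f Hess : smooth F ->
  (forall x i, is_partial F i x (f x i)) ->
  (forall x i j, is_partial (fun y => f y i) j x (Hess x i j)) ->
  exists T : 'I_d -> 'I_d -> 'I_d -> vec d -> R,
   (forall i j a x, is_partial (fun y => Hess y i j) a x (T i j a x)) /\
   (forall i j a, continuous_vec (T i j a)) /\
   (forall x i j, Hess x i j = Hess x j i) /\
   (forall i j a x, T i j a x = T a j i x).
Proof.
move=> Hs Hg HH.
have Ex := third_ex F f Hess Hs Hg HH.
pose T i j a := proj1_sig (constructive_indefinite_description _ (Ex i j a)).
have HT : forall i j a, (forall x, is_partial (fun y => Hess y i j) a x (T i j a x)) /\ continuous_vec (T i j a).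
  move=> i j a; exact: (proj2_sig (constructive_indefinite_description _ (Ex i j a))).
have Hsym : forall x i j, Hess x i j = Hess x j i.
  move=> x i j; apply: (schwarz_vec F (fun j y => f y j) (fun j k y => Hess y j k)) => //.
  exact: hess_cont Hs Hg HH.
have T23 : forall i j a x, T i j a x = T i a j x.
  move=> i j a x; apply: (schwarz_vec (fun y => f y i) (fun j y => Hess y i j) (fun j a => T i j a)).
  - move=> k y; exact: HH.
  - move=> k b y; exact: (proj1 (HT i k b)).
  - move=> k b; exact: (proj2 (HT i k b)).
have T12 : forall i j a x, T i j a x = T j i a x.
  move=> i j a x; apply: (is_partial_unique (fun y => Hess y i j) a x).
  - exact: (proj1 (HT i j a)).
  - have -> : (fun y => Hess y i j) = (fun y => Hess y j i).
      by apply: functional_extensionality => y; rewrite Hsym.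
    exact: (proj1 (HT j i a)).
exists T; split; [|split; [|split]] => //.
- move=> i j a x; exact: (proj1 (HT i j a)).
- move=> i j a; exact: (proj2 (HT i j a)).
- move=> i j a x; rewrite T12 T23 T12 //.
Qed.

Lemma vsum_mulr {n} c (f : 'I_n -> R) : vsum (fun i => f i * c) = vsum f * c.
Proof. rewrite Rmult_comm -vsum_scal; apply: vsum_ext => i; ring. Qed.

Lemma Asolve {d} (A B : 'I_d -> 'I_d -> R) (x y : vec d) :
  (forall i j, vsum (fun k => B i k * A k j) = kdelta i j) ->
  (forall i, vsum (fun k => A i k * x k) = y i) ->
  forall i, x i = vsum (fun k => B i k * y k).
Proof.
move=> HBA Hy i.
transitivity (vsum (fun k => vsum (fun l => B i l * A l k) * x k)).
  rewrite -(vsum_delta_l x i); apply: vsum_ext => k; by rewrite HBA.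
rewrite [RHS](vsum_ext _ (fun l => vsum (fun k => B i l * (A l k * x k)))); last first.
  by move=> l; rewrite -Hy -vsum_scal.
rewrite vsum_swap; apply: vsum_ext => k /=. rewrite -(vsum_mulr (x k)); apply: vsum_ext => l; ring.
Qed.

Lemma Aform {d} N (H M : 'I_d -> 'I_d -> R) (x : vec d) i :
  vsum (fun k => (kdelta i k + N * vsum (fun j => H i j * M j k)) * x k) =
  x i + N * vsum (fun j => H i j * vsum (fun k => M j k * x k)).
Proof.
rewrite (vsum_ext _ (fun k => kdelta i k * x k + N * vsum (fun j => H i j * M j k * x k))); last first.
  by move=> k; rewrite vsum_mulr; ring.
rewrite vsum_add vsum_delta_l vsum_scal; congr (_ + N * _).
rewrite vsum_swap; apply: vsum_ext => j; rewrite -vsum_scal; apply: vsum_ext => k; ring.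
Qed.

Lemma bil_sym {d} (M : 'I_d -> 'I_d -> R) (x y : vec d) : (forall i j, M i j = M j i) ->
  vsum (fun i => x i * vsum (fun l => M i l * y l)) = vsum (fun i => y i * vsum (fun l => M i l * x l)).
Proof.
move=> HM.
rewrite (vsum_ext _ (fun i => vsum (fun l => x i * M i l * y l))); last first.
  by move=> i; rewrite -vsum_scal; apply: vsum_ext => l; ring.
rewrite vsum_swap; apply: vsum_ext => l; rewrite -vsum_scal; apply: vsum_ext => i; rewrite HM; ring.
Qed.

Lemma trans_form {d} (M H : 'I_d -> 'I_d -> R) (x : vec d) b :
  (forall i j, M i j = M j i) -> (forall i j, H i j = H j i) ->
  vsum (fun i => x i * vsum (fun l => M i l * H l b)) =
  vsum (fun i => vsum (fun j => H b j * M j i) * x i).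
Proof.
move=> HM HH; apply: vsum_ext => i; rewrite -vsum_scal -vsum_mulr.
apply: vsum_ext => l; rewrite HM HH; ring.
Qed.

Lemma abs_lin_le {d} (B : 'I_d -> R) (w : vec d) :
  Rabs (vsum (fun l => B l * w l)) <= vsum (fun l => Rabs (B l) * Rabs (w l)).
Proof. apply: Rle_trans (vsum_abs _) _; apply: vsum_le => l; rewrite Rabs_mult; lra. Qed.

Lemma sum_prod_le {d} (a b : vec d) : (forall l, 0 <= a l) -> (forall l, 0 <= b l) ->
  vsum (fun l => a l * b l) <= vsum a * vsum b.
Proof.
move=> Ha Hb; apply: (Rle_trans _ (vsum (fun l => a l * vsum b))).
  apply: vsum_le => l; apply: Rmult_le_compat_l => //; exact: vsum_term.
rewrite vsum_mulr; lra.
Qed.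

Lemma bound_lemma {d} (B M : 'I_d -> 'I_d -> R) (x df : vec d) (dH : 'I_d -> 'I_d -> R)
  (P0 : vec d) (hc N : R) : 0 <= N ->
  (forall k, x k = vsum (fun l => B k l * (- hc * df l - N * vsum (fun j => dH l j *
      vsum (fun r => M j r * (P0 r + x r)))))) ->
  let bB := vsum (fun k => vsum (fun l => Rabs (B k l))) in
  let bM := vsum (fun k => vsum (fun l => Rabs (M k l))) in
  let dHs := vsum (fun k => vsum (fun l => Rabs (dH k l))) in
  let dfs := vsum (fun k => Rabs (df k)) in
  let pi := vsum (fun k => Rabs (P0 k)) in
  bB * N * bM * dHs <= 1/2 ->
  vsum (fun k => Rabs (x k)) <= 2 * (bB * Rabs hc * dfs + bB * N * bM * dHs * pi).
Proof.
move=> HN Hx bB bM dHs dfs pi HK.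
set U := vsum (fun k => Rabs (x k)).
pose w l := - hc * df l - N * vsum (fun j => dH l j * vsum (fun r => M j r * (P0 r + x r))).
set W := vsum (fun l => Rabs (w l)).
have HU0 : 0 <= U by apply: vsum_ge0 => k; exact: Rabs_pos.
have HW0 : 0 <= W by apply: vsum_ge0 => k; exact: Rabs_pos.
have HbB : 0 <= bB by apply: vsum_ge0 => k; apply: vsum_ge0 => l; exact: Rabs_pos.
have HbM : 0 <= bM by apply: vsum_ge0 => k; apply: vsum_ge0 => l; exact: Rabs_pos.
have HdH : 0 <= dHs by apply: vsum_ge0 => k; apply: vsum_ge0 => l; exact: Rabs_pos.
have Hpi : 0 <= pi by apply: vsum_ge0 => k; exact: Rabs_pos.
have Hdf : 0 <= dfs by apply: vsum_ge0 => k; exact: Rabs_pos.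
have S1 : U <= bB * W.
  rewrite /U /bB -vsum_mulr; apply: vsum_le => k; rewrite Hx.
  apply: Rle_trans (abs_lin_le _ _) _.
  apply: sum_prod_le => l; exact: Rabs_pos.
have S2 : forall j, Rabs (vsum (fun r => M j r * (P0 r + x r))) <= bM * (pi + U).
  move=> j; apply: Rle_trans (abs_lin_le _ _) _.
  apply: Rle_trans (sum_prod_le (fun r => Rabs (M j r)) (fun r => Rabs (P0 r + x r)) _ _) _;
    [move=> l; exact: Rabs_pos|move=> l; exact: Rabs_pos|].
  apply: Rmult_le_compat.
  - apply: vsum_ge0 => l; exact: Rabs_pos.
  - apply: vsum_ge0 => l; exact: Rabs_pos.
  - exact: (vsum_term (fun k => vsum (fun l => Rabs (M k l))) j (fun k => vsum_ge0 _ (fun l => Rabs_pos _))).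
  - rewrite /pi /U -vsum_add; apply: vsum_le => l; exact: Rabs_triang.
have S3 : forall l, Rabs (w l) <= Rabs hc * Rabs (df l) +
     N * (bM * (pi + U)) * vsum (fun j => Rabs (dH l j)).
  move=> l; rewrite /w.
  have -> : - hc * df l - N * vsum (fun j => dH l j * vsum (fun r => M j r * (P0 r + x r)))
    = (- hc * df l) + (- N) * vsum (fun j => dH l j * vsum (fun r => M j r * (P0 r + x r))) by ring.
  apply: Rle_trans (Rabs_triang _ _) _.
  rewrite !Rabs_mult Rabs_Ropp (Rabs_Ropp N) (Rabs_pos_eq N) //.
  apply: Rplus_le_compat_l.
  rewrite Rmult_assoc; apply: Rmult_le_compat_l => //.
  apply: Rle_trans (abs_lin_le _ _) _.
  rewrite Rmult_comm -vsum_mulr; apply: vsum_le => j.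
  apply: Rmult_le_compat_l; [exact: Rabs_pos| exact: S2].
have S4 : W <= Rabs hc * dfs + N * (bM * (pi + U)) * dHs.
  rewrite /W /dfs /dHs -!vsum_scal -vsum_add; apply: vsum_le => l; exact: S3.
have S5 : U <= bB * Rabs hc * dfs + bB * N * bM * dHs * pi + (bB * N * bM * dHs) * U.
  apply: Rle_trans S1 _.
  have := Rmult_le_compat_l _ _ _ HbB S4; lra.
nra.
Qed.

Lemma dpl_eq f x l1 l2 : derivable_pt_lim f x l1 -> l1 = l2 -> derivable_pt_lim f x l2.
Proof. by move=> H <-. Qed.
Lemma dpl_plus' f1 f2 x l1 l2 : derivable_pt_lim f1 x l1 -> derivable_pt_lim f2 x l2 ->
  derivable_pt_lim (fun t => f1 t + f2 t) x (l1 + l2).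
Proof. exact: derivable_pt_lim_plus. Qed.
Lemma dpl_minus' f1 f2 x l1 l2 : derivable_pt_lim f1 x l1 -> derivable_pt_lim f2 x l2 ->
  derivable_pt_lim (fun t => f1 t - f2 t) x (l1 - l2).
Proof. exact: derivable_pt_lim_minus. Qed.
Lemma dpl_scal' c f x l : derivable_pt_lim f x l ->
  derivable_pt_lim (fun t => c * f t) x (c * l).
Proof. exact: derivable_pt_lim_scal. Qed.
Lemma dpl_const' c x : derivable_pt_lim (fun _ => c) x 0.
Proof. exact: derivable_pt_lim_const. Qed.
Lemma dpl_affine c L : derivable_pt_lim (fun t => c + t * L) 0 L.
Proof.
move=> eps He; exists (mkposreal _ Rlt_0_1) => h0 Hh _.
have -> : (c + (0 + h0) * L - (c + 0 * L)) / h0 - L = 0 by field.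
by rewrite Rabs_R0.
Qed.
Lemma cont_minus' f1 f2 x : continuity_pt f1 x -> continuity_pt f2 x ->
  continuity_pt (fun t => f1 t - f2 t) x.
Proof. exact: continuity_pt_minus. Qed.
Lemma cont_scal' c f x : continuity_pt f x -> continuity_pt (fun t => c * f t) x.
Proof. exact: continuity_pt_scal. Qed.
Lemma cont_const' c x : continuity_pt (fun _ => c) x.
Proof. by apply: continuity_pt_const. Qed.

Lemma lin_diff {d} (H M : 'I_d -> 'I_d -> R) (a b : vec d) i :
  vsum (fun j => H i j * vsum (fun k => M j k * (a k - b k))) =
  vsum (fun j => H i j * vsum (fun k => M j k * a k)) -
  vsum (fun j => H i j * vsum (fun k => M j k * b k)).
Proof.
rewrite -vsum_sub; apply: vsum_ext => j.
rewrite -Rmult_minus_distr_l -vsum_sub; congr (_ * _); apply: vsum_ext => k; ring.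
Qed.

Lemma lin_diff2 {d} (a b c : vec d) :
  vsum (fun j => (a j - b j) * c j) = vsum (fun j => a j * c j) - vsum (fun j => b j * c j).
Proof. rewrite -vsum_sub; apply: vsum_ext => j; ring. Qed.

Definition Amat {d} (Hess : vec d -> 'I_d -> 'I_d -> R) (M : 'I_d -> 'I_d -> R) h q i j :=
  kdelta i j + h ^ 2 / 2 * vsum (fun k => Hess q i k * M k j).

Lemma keyeq {d m} (Hess : vec d -> 'I_d -> 'I_d -> R) f M v h (sigma : 'I_d -> 'I_m -> R) dW
  (P1 : vec d -> vec d -> vec d)
  (HP : forall p q i,
     P1 p q i = exp (- v * h) * p i
       - h ^ 2 / 2 * vsum (fun j => Hess q i j * vsum (fun k => M j k * P1 p q k))
       - h * (1 + v * h / 2) * exp (- v * h) * f q i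
       - (1 + v * h / 2) * exp (- v * h) * vsum (fun r => sigma i r * dW r)) p q i :
  P1 p q i + h ^ 2 / 2 * vsum (fun j => Hess q i j * vsum (fun k => M j k * P1 p q k)) =
  exp (- v * h) * p i - h * (1 + v * h / 2) * exp (- v * h) * f q i
       - (1 + v * h / 2) * exp (- v * h) * vsum (fun r => sigma i r * dW r).
Proof. rewrite {1}HP; ring. Qed.

Lemma Pp_deriv {d m} (Hess : vec d -> 'I_d -> 'I_d -> R) f M v h (sigma : 'I_d -> 'I_m -> R) dW
  (P1 : vec d -> vec d -> vec d)
  (HP : forall p q i,
     P1 p q i = exp (- v * h) * p i
       - h ^ 2 / 2 * vsum (fun j => Hess q i j * vsum (fun k => M j k * P1 p q k))
       - h * (1 + v * h / 2) * exp (- v * h) * f q i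
       - (1 + v * h / 2) * exp (- v * h) * vsum (fun r => sigma i r * dW r))
  (Bf : vec d -> 'I_d -> 'I_d -> R)
  (HBA : forall q i j, vsum (fun k => Bf q i k * Amat Hess M h q k j) = kdelta i j) :
  forall p q i a, is_partial (fun p' => P1 p' q i) a p (exp (- v * h) * Bf q i a).
Proof.
move=> p q i a.
have X : forall t k, P1 (shift p a t) q k - P1 p q k =
    vsum (fun l => Bf q k l * (exp (- v * h) * (t * kdelta l a))).
  move=> t; apply: (Asolve (Amat Hess M h q) (Bf q)) => // i'.
  rewrite /Amat Aform lin_diff.
  have K1 := keyeq Hess f M v h sigma dW P1 HP (shift p a t) q i'.
  have K2 := keyeq Hess f M v h sigma dW P1 HP p q i'.
  move: K1 K2; rewrite /shift /kdelta; case: eqP => _ K1 K2.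
  - rewrite Rmult_1_r; nra.
  - rewrite Rmult_0_r; nra.
rewrite /is_partial.
have -> : (fun t => P1 (shift p a t) q i) = (fun t => P1 p q i + t * (exp (- v * h) * Bf q i a)).
  apply: functional_extensionality => t.
  have := X t i.
  rewrite (vsum_ext _ (fun l => (t * exp (- v * h) * Bf q i l) * kdelta l a)); last first.
    by move=> l; ring.
  rewrite vsum_delta => H; rewrite -[LHS](Rplus_0_r) -(Rminus_diag (P1 p q i)); lra.
exact: dpl_affine.
Qed.

Lemma Pq_deriv {d m} (Hess : vec d -> 'I_d -> 'I_d -> R) f M v h (sigma : 'I_d -> 'I_m -> R) dW
  (P1 : vec d -> vec d -> vec d)
  (HP : forall p q i,
     P1 p q i = exp (- v * h) * p i
       - h ^ 2 / 2 * vsum (fun j => Hess q i j * vsum (fun k => M j k * P1 p q k))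
       - h * (1 + v * h / 2) * exp (- v * h) * f q i
       - (1 + v * h / 2) * exp (- v * h) * vsum (fun r => sigma i r * dW r))
  (Bf : vec d -> 'I_d -> 'I_d -> R)
  (HBA : forall q i j, vsum (fun k => Bf q i k * Amat Hess M h q k j) = kdelta i j)
  (T : 'I_d -> 'I_d -> 'I_d -> vec d -> R)
  (HT : forall i j a x, is_partial (fun y => Hess y i j) a x (T i j a x))
  (HHess : forall x i j, is_partial (fun y => f y i) j x (Hess x i j)) :
  forall p q i a, is_partial (fun q' => P1 p q' i) a q
    (vsum (fun k => Bf q i k * (- (h * (1 + v * h / 2) * exp (- v * h)) * Hess q k a
        - h ^ 2 / 2 * vsum (fun j => T k j a q * vsum (fun l => M j l * P1 p q l))))).
Proof.
move=> p q i a.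
pose hc := h * (1 + v * h / 2) * exp (- v * h).
pose N := h ^ 2 / 2.
have HN : 0 <= N by rewrite /N; have := pow2_ge_0 h; lra.
pose w t l := - hc * (f (shift q a t) l - f q l) - N * vsum (fun j =>
   (Hess (shift q a t) l j - Hess q l j) * vsum (fun r => M j r * P1 p (shift q a t) r)).
have X : forall t k, P1 p (shift q a t) k - P1 p q k = vsum (fun l => Bf q k l * w t l).
  move=> t; apply: (Asolve (Amat Hess M h q) (Bf q)) => // i'.
  rewrite /Amat Aform lin_diff /w lin_diff2.
  have K1 := keyeq Hess f M v h sigma dW P1 HP p (shift q a t) i'.
  have K2 := keyeq Hess f M v h sigma dW P1 HP p q i'.
  rewrite /N /hc; nra.
have Hs0 := shift0 q a.
have CH : forall l j, continuity_pt (fun t => Hess (shift q a t) l j) 0.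
  move=> l j; exact: dpl_cont (HT l j a q).
have CF : forall l, continuity_pt (fun t => f (shift q a t) l) 0.
  move=> l; exact: dpl_cont (HHess q l a).
pose bB := vsum (fun k => vsum (fun l => Rabs (Bf q k l))).
pose bM := vsum (fun k => vsum (fun l => Rabs (M k l))).
pose dHs t := vsum (fun k => vsum (fun l => Rabs (Hess (shift q a t) k l - Hess q k l))).
pose dfs t := vsum (fun k => Rabs (f (shift q a t) k - f q k)).
pose pi := vsum (fun k => Rabs (P1 p q k)).
have CdH : continuity_pt dHs 0.
  apply: (cont_vsum (fun k t => vsum (fun l => Rabs (Hess (shift q a t) k l - Hess q k l)))) => k.
  apply: (cont_vsum (fun l t => Rabs (Hess (shift q a t) k l - Hess q k l))) => l.
  apply: cont_abs; apply: cont_minus' => //; exact: cont_const'.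
have Cdf : continuity_pt dfs 0.
  apply: (cont_vsum (fun k t => Rabs (f (shift q a t) k - f q k))) => k.
  apply: cont_abs; apply: cont_minus' => //; exact: cont_const'.
have dH0 : dHs 0 = 0.
  rewrite /dHs Hs0 (vsum_ext _ (fun _ => 0)) ?vsum0 // => k.
  rewrite (vsum_ext _ (fun _ => 0)) ?vsum0 // => l; rewrite Rminus_diag Rabs_R0 //.
have df0 : dfs 0 = 0.
  rewrite /dfs Hs0 (vsum_ext _ (fun _ => 0)) ?vsum0 // => k; rewrite Rminus_diag Rabs_R0 //.
have C : forall k, continuity_pt (fun t => P1 p (shift q a t) k) 0.
  move=> k.
  apply: (cont_bound (fun t => bB * N * bM * dHs t)
     (fun t => 2 * (bB * Rabs hc * dfs t + bB * N * bM * dHs t * pi))).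
  - exact: cont_scal'.
  - by rewrite dH0; ring.
  - apply: cont_scal'; apply: continuity_pt_plus.
    + exact: cont_scal'.
    + apply: (continuity_pt_mult (fun t => bB * N * bM * dHs t) (fun _ => pi)).
      * exact: cont_scal'.
      * exact: cont_const'.
  - by rewrite dH0 df0; ring.
  - move=> t Ht; rewrite Hs0.
    apply: Rle_trans (vsum_term (fun k => Rabs (P1 p (shift q a t) k - P1 p q k)) k (fun _ => Rabs_pos _)) _.
    apply: (bound_lemma (Bf q) M (fun k => P1 p (shift q a t) k - P1 p q k)
      (fun l => f (shift q a t) l - f q l) (fun l j => Hess (shift q a t) l j - Hess q l j)
      (P1 p q) hc N HN) => //.
    move=> k'; rewrite X; apply: vsum_ext => l; rewrite /w; congr (_ * (_ - N * _)).
    apply: vsum_ext => j; congr (_ * _); apply: vsum_ext => r; congr (_ * _); ring.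
rewrite /is_partial.
have -> : (fun t => P1 p (shift q a t) i) = (fun t => P1 p q i + vsum (fun l => Bf q i l * w t l)).
  apply: functional_extensionality => t; rewrite -X; ring.
eapply dpl_eq.
  apply: dpl_plus'; first exact: dpl_const'.
  apply: (dpl_vsum (fun l t => Bf q i l * w t l)) => l.
  apply: dpl_scal'.
  apply: dpl_minus'.
    apply: dpl_scal'; apply: dpl_minus'; [exact: HHess | exact: dpl_const'].
  apply: dpl_scal'.
  apply: (dpl_vsum (fun j t => (Hess (shift q a t) l j - Hess q l j) *
       vsum (fun r => M j r * P1 p (shift q a t) r))) => j.
  apply: (dpl_prod0 (fun t => Hess (shift q a t) l j - Hess q l j)
             (fun t => vsum (fun r => M j r * P1 p (shift q a t) r))).
  - by rewrite Hs0 Rminus_diag.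
  - apply: dpl_minus'; [exact: HT | exact: dpl_const'].
  - apply: (cont_vsum (fun r t => M j r * P1 p (shift q a t) r)) => r.
    apply: cont_scal'; exact: C.
rewrite Rplus_0_l; apply: vsum_ext => l; rewrite /hc /N Hs0; congr (_ * (_ - _ * _)).
  ring.
apply: vsum_ext => j; ring.
Qed.

Lemma bil_anti {d} (M : 'I_d -> 'I_d -> R) k (x y : vec d) : (forall i j, M i j = M j i) ->
  vsum (fun i => x i * (k * vsum (fun l => M i l * y l)) - y i * (k * vsum (fun l => M i l * x l))) = 0.
Proof.
move=> HM; rewrite vsum_sub.
rewrite (vsum_ext _ (fun i => k * (x i * vsum (fun l => M i l * y l)))); last by move=> i; ring.
rewrite [X in _ - X](vsum_ext _ (fun i => k * (y i * vsum (fun l => M i l * x l)))); last by move=> i; ring.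
rewrite !vsum_scal (bil_sym M x y HM); ring.
Qed.

Lemma Aform2 {d} N (H M : 'I_d -> 'I_d -> R) (x : vec d) b :
  (forall i j, M i j = M j i) -> (forall i j, H i j = H j i) ->
  vsum (fun k => (kdelta b k + N * vsum (fun j => H b j * M j k)) * x k) =
  x b + N * vsum (fun i => x i * vsum (fun l => M i l * H l b)).
Proof.
move=> HM HH; rewrite Aform trans_form //; congr (_ + N * _).
rewrite (vsum_ext _ (fun j => vsum (fun i => H b j * M j i * x i))); last first.
  by move=> j; rewrite -vsum_scal; apply: vsum_ext => i; ring.
rewrite vsum_swap; apply: vsum_ext => i; rewrite vsum_mulr //.
Qed.

Lemma ABapply {d} (A B : 'I_d -> 'I_d -> R) (r : vec d) b :
  (forall i j, vsum (fun k => A i k * B k j) = kdelta i j) ->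
  vsum (fun k => A b k * vsum (fun m => B k m * r m)) = r b.
Proof.
move=> HAB.
rewrite (vsum_ext _ (fun k => vsum (fun m => A b k * B k m * r m))); last first.
  by move=> k; rewrite -vsum_scal; apply: vsum_ext => m; ring.
rewrite vsum_swap -(vsum_delta_l r b); apply: vsum_ext => m.
by rewrite vsum_mulr HAB.
Qed.

Lemma dpl_shift_coord {d} (q : vec d) a i : derivable_pt_lim (fun t => shift q a t i) 0 (kdelta i a).
Proof.
rewrite /shift /kdelta; case: eqP => _.
- have -> : (fun t => q i + t) = (fun t => q i + t * 1) by apply: functional_extensionality => t; ring.
  exact: dpl_affine.
- exact: dpl_const'.
Qed.

Theorem theorem3p1
  (d m : nat) (Hdm : leq d m)
  (F : vec d -> R) (f : vec d -> vec d) (Hess : vec d -> 'I_d -> 'I_d -> R)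
  (HFsmooth : smooth F)
  (Hgrad : forall x i, is_partial F i x (f x i))
  (HHess : forall x i j, is_partial (fun y => f y i) j x (Hess x i j))
  (M : 'I_d -> 'I_d -> R)
  (HMsym : forall i j, M i j = M j i)
  (HMpd : forall x : vec d, (exists i, x i <> 0) ->
            0 < vsum (fun i => vsum (fun j => x i * M i j * x j)))
  (v : R) (Hv : 0 < v)
  (sigma : 'I_d -> 'I_m -> R)
  (Hrank : forall y : vec d, (forall r, vsum (fun i => y i * sigma i r) = 0) ->
             forall i, y i = 0)
  (h : R) (Hh : 0 < h)
  (Hinv : forall q : vec d, exists B : 'I_d -> 'I_d -> R,
     let A := fun i j => kdelta i j + h ^ 2 / 2 * vsum (fun k => Hess q i k * M k j) in
     (forall i j, vsum (fun k => A i k * B k j) = kdelta i j) /\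
     (forall i j, vsum (fun k => B i k * A k j) = kdelta i j)) :
  forall (dW : vec m) (P1 Q1 : vec d -> vec d -> vec d),
  (forall p q i,
     P1 p q i = exp (- v * h) * p i
       - h ^ 2 / 2 * vsum (fun j => Hess q i j * vsum (fun k => M j k * P1 p q k))
       - h * (1 + v * h / 2) * exp (- v * h) * f q i
       - (1 + v * h / 2) * exp (- v * h) * vsum (fun r => sigma i r * dW r)) ->
  (forall p q i,
     Q1 p q i = q i
       + h * (1 - v * h / 2) * exp (v * h) * vsum (fun k => M i k * P1 p q k)
       + h ^ 2 / 2 * vsum (fun k => M i k * f q k)
       + h / 2 * vsum (fun k => M i k * vsum (fun r => sigma k r * dW r))) ->
  exists (Pp Pq Qp Qq : vec d -> vec d -> 'I_d -> 'I_d -> R),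
    (* Pp p q i a = dP1_i/dp_a, Pq p q i a = dP1_i/dq_a, etc. *)
    (forall p q i a,
       is_partial (fun p' => P1 p' q i) a p (Pp p q i a) /\
       is_partial (fun q' => P1 p q' i) a q (Pq p q i a) /\
       is_partial (fun p' => Q1 p' q i) a p (Qp p q i a) /\
       is_partial (fun q' => Q1 p q' i) a q (Qq p q i a)) /\
    (* dP1 /\ dQ1 = e^{-vh} dp /\ dq, coefficientwise *)
    (forall p q a b,
       vsum (fun i => Pp p q i a * Qp p q i b - Pp p q i b * Qp p q i a) = 0 /\
       vsum (fun i => Pq p q i a * Qq p q i b - Pq p q i b * Qq p q i a) = 0 /\
       vsum (fun i => Pp p q i a * Qq p q i b - Pq p q i b * Qp p q i a)
         = exp (- v * h) * kdelta a b).
Proof.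
move=> dW P1 Q1 HP HQ.
have [T [HT [HTc [Hsym T13]]]] := third_fun F f Hess HFsmooth Hgrad HHess.
pose Bf q := proj1_sig (constructive_indefinite_description _ (Hinv q)).
have HB : forall q, (forall i j, vsum (fun k => Amat Hess M h q i k * Bf q k j) = kdelta i j) /\
   (forall i j, vsum (fun k => Bf q i k * Amat Hess M h q k j) = kdelta i j).
  move=> q; exact: (proj2_sig (constructive_indefinite_description _ (Hinv q))).
have HBA : forall q i j, vsum (fun k => Bf q i k * Amat Hess M h q k j) = kdelta i j.
  move=> q; exact: (proj2 (HB q)).
have HAB : forall q i j, vsum (fun k => Amat Hess M h q i k * Bf q k j) = kdelta i j.
  move=> q; exact: (proj1 (HB q)).
pose PQ p q i a := vsum (fun k => Bf q i k * (- (h * (1 + v * h / 2) * exp (- v * h)) * Hess q k a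
        - h ^ 2 / 2 * vsum (fun j => T k j a q * vsum (fun l => M j l * P1 p q l)))).
pose kk := h * (1 - v * h / 2) * exp (v * h).
exists (fun p q i a => exp (- v * h) * Bf q i a), PQ,
  (fun p q i a => kk * vsum (fun l => M i l * (exp (- v * h) * Bf q l a))),
  (fun p q i a => kdelta i a + kk * vsum (fun l => M i l * PQ p q l a)
      + h ^ 2 / 2 * vsum (fun l => M i l * Hess q l a)).
split.
- move=> p q i a; split; [|split; [|split]].
  + exact: (Pp_deriv Hess f M v h sigma dW P1 HP Bf HBA p q i a).
  + exact: (Pq_deriv Hess f M v h sigma dW P1 HP Bf HBA T HT HHess p q i a).
  + rewrite /is_partial.
    have -> : (fun t => Q1 (shift p a t) q i) = (fun t => q i
       + kk * vsum (fun k => M i k * P1 (shift p a t) q k)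
       + h ^ 2 / 2 * vsum (fun k => M i k * f q k)
       + h / 2 * vsum (fun k => M i k * vsum (fun r => sigma k r * dW r))).
      by apply: functional_extensionality => t; rewrite HQ.
    eapply dpl_eq.
      apply: dpl_plus'; last exact: dpl_const'.
      apply: dpl_plus'; last exact: dpl_const'.
      apply: dpl_plus'; first exact: dpl_const'.
      apply: dpl_scal'.
      apply: (dpl_vsum (fun k t => M i k * P1 (shift p a t) q k)) => k.
      apply: dpl_scal'.
      exact: (Pp_deriv Hess f M v h sigma dW P1 HP Bf HBA p q k a).
    cbv beta; ring.
  + rewrite /is_partial.
    have -> : (fun t => Q1 p (shift q a t) i) = (fun t => shift q a t i
       + kk * vsum (fun k => M i k * P1 p (shift q a t) k)
       + h ^ 2 / 2 * vsum (fun k => M i k * f (shift q a t) k)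
       + h / 2 * vsum (fun k => M i k * vsum (fun r => sigma k r * dW r))).
      by apply: functional_extensionality => t; rewrite HQ.
    eapply dpl_eq.
      apply: dpl_plus'; last exact: dpl_const'.
      apply: dpl_plus'.
      apply: dpl_plus'; first exact: dpl_shift_coord.
      apply: dpl_scal'.
      apply: (dpl_vsum (fun k t => M i k * P1 p (shift q a t) k)) => k.
      apply: dpl_scal'.
      exact: (Pq_deriv Hess f M v h sigma dW P1 HP Bf HBA T HT HHess p q k a).
      apply: dpl_scal'.
      apply: (dpl_vsum (fun k t => M i k * f (shift q a t) k)) => k.
      apply: dpl_scal'.
      exact: HHess.
    cbv beta; rewrite /PQ; ring.
- move=> p q a b; split; [|split].
  + exact: (bil_anti M kk (fun l => exp (- v * h) * Bf q l a) (fun l => exp (- v * h) * Bf q l b) HMsym).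
  + pose x l := PQ p q l a. pose y l := PQ p q l b.
    pose R i c := vsum (fun l => M i l * Hess q l c).
    rewrite (vsum_ext _ (fun i => (x i * kdelta i b - y i * kdelta i a)
        + (x i * (kk * vsum (fun l => M i l * y l)) - y i * (kk * vsum (fun l => M i l * x l)))
        + h ^ 2 / 2 * (x i * R i b - y i * R i a))); last by move=> i; rewrite /x /y /R; ring.
    rewrite !vsum_add !vsum_opp !vsum_delta vsum_scal vsum_sub.
    have BA := bil_anti M kk x y HMsym; rewrite vsum_sub in BA.
    have A1 := Aform2 (h ^ 2 / 2) (Hess q) M x b HMsym (Hsym q).
    have A2 := Aform2 (h ^ 2 / 2) (Hess q) M y a HMsym (Hsym q).
    have B1 := ABapply (Amat Hess M h q) (Bf q) (fun k => - (h * (1 + v * h / 2) * exp (- v * h)) * Hess q k a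
        - h ^ 2 / 2 * vsum (fun j => T k j a q * vsum (fun l => M j l * P1 p q l))) b (HAB q).
    have B2 := ABapply (Amat Hess M h q) (Bf q) (fun k => - (h * (1 + v * h / 2) * exp (- v * h)) * Hess q k b
        - h ^ 2 / 2 * vsum (fun j => T k j b q * vsum (fun l => M j l * P1 p q l))) a (HAB q).
    rewrite /Amat in B1 B2.
    rewrite /x in A1; rewrite /y in A2.
    rewrite /PQ in A1 A2.
    rewrite A1 in B1; rewrite A2 in B2.
    have Sy : vsum (fun j => T b j a q * vsum (fun l => M j l * P1 p q l)) =
              vsum (fun j => T a j b q * vsum (fun l => M j l * P1 p q l)).
      by apply: vsum_ext => j; rewrite T13.
    rewrite /R /x /y /PQ.
    rewrite Sy (Hsym q b a) in B1.
    rewrite /x /y /R /PQ in BA. lra.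
  + pose x l := exp (- v * h) * Bf q l a. pose y l := PQ p q l b.
    pose R i c := vsum (fun l => M i l * Hess q l c).
    rewrite (vsum_ext _ (fun i => (x i * kdelta i b + h ^ 2 / 2 * (x i * R i b))
        + (x i * (kk * vsum (fun l => M i l * y l)) - y i * (kk * vsum (fun l => M i l * x l)))));
      last by move=> i; rewrite /x /y /R; ring.
    rewrite !vsum_add !vsum_opp vsum_delta vsum_scal.
    have BA := bil_anti M kk x y HMsym; rewrite vsum_sub in BA.
    have A1 := Aform2 (h ^ 2 / 2) (Hess q) M x b HMsym (Hsym q).
    have C : vsum (fun k => (kdelta b k + h ^ 2 / 2 * vsum (fun j => Hess q b j * M j k)) * x k)
        = exp (- v * h) * kdelta a b.
      rewrite (vsum_ext _ (fun k => exp (- v * h) * (Amat Hess M h q b k * Bf q k a))); last first.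
        by move=> k; rewrite /x /Amat; ring.
      by rewrite vsum_scal HAB kdeltaC.
    rewrite /R; lra.
Qed.
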